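(* Let $N\ge0$ be an integer, let $\vec\beta$ be admissible, and let $\ell<0$. Then the numbers $p_0(\ell),\dots,p_N(\ell)$ defined in the context satisfy $0\le p_k(\ell)\le1$ for every $k$ and $\sum_{k=0}^Np_k(\ell)=1$. Consequently they define a probability distribution on $\{0,\dots,N\}$.
   Context: Let $N\ge0$ be an integer. A vector $\vec\beta=(\beta_0,\dots,\beta_N)$ is admissible if $\beta_0\ge\beta_1\ge\cdots\ge\beta_N>0$ and $\sum_i\beta_i=1$. For such a vector put $\mu_i=\beta_{i+1}/\sum_{j=0}^i\beta_j$ for $0\le i\le N-1$. For $\ell<0$ define: - if $N=0$, $p_0(\ell)=1$; - if $N\ge1$, $p_N(\ell)=\exp\!\big(-\frac{(1-\beta_N)\ell^2}{2\beta_N}\big)$; - for $1\le k\le N-1$, $$p_k(\ell)=\Big(\prod_{m=k}^{N-1}\frac1{\mu_m}\Big)\sum_{j=k-1}^{N-1}e^{-\ell^2/(2\mu_j)}\prod_{\substack{m=k-1\\ m\ne j}}^{N-1}\frac1{1/\mu_m-1/\mu_j};$$ - $p_0(\ell)=1-\sum_{k=1}^Np_k(\ell)$. *)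

(* Defs.v *)
From Stdlib Require Import Reals Lra Lia List.
Import ListNotations.
Open Scope R_scope.

(* Finite sum / product of f i over i = a, a+1, ..., b (empty if b < a). *)
Definition rsum (a b : nat) (f : nat -> R) : R :=
  fold_right Rplus 0 (map f (seq a (S b - a))).
Definition rprod (a b : nat) (f : nat -> R) : R :=
  fold_right Rmult 1 (map f (seq a (S b - a))).

(* beta : nat -> R, only beta 0 .. beta N are relevant. *)
Definition admissible (N : nat) (beta : nat -> R) : Prop :=
  (forall i : nat, (i < N)%nat -> beta (S i) <= beta i) /\
  0 < beta N /\
  rsum 0 N beta = 1.

Definition mu (beta : nat -> R) (i : nat) : R :=
  beta (S i) / rsum 0 i beta.

Definition p_pos (N : nat) (beta : nat -> R) (l : R) (k : nat) : R :=
  if (k =? N)%nat then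
    exp (- ((1 - beta N) * l ^ 2) / (2 * beta N))
  else
    rprod k (N - 1) (fun m => / mu beta m) *
    rsum (k - 1) (N - 1) (fun j =>
      exp (- l ^ 2 / (2 * mu beta j)) *
      rprod (k - 1) (N - 1) (fun m =>
        if (m =? j)%nat then 1
        else / (/ mu beta m - / mu beta j))).

Definition p (N : nat) (beta : nat -> R) (l : R) (k : nat) : R :=
  if (k =? 0)%nat then
    (match N with
     | O => 1
     | _ => 1 - rsum 1 N (p_pos N beta l)
     end)
  else p_pos N beta l k.

(* Main.v *)
Require Import Defs.
From Stdlib Require Import Reals List.
From Stdlib Require Import Lra Lia.
From Coquelicot Require Import Coquelicot.
Import ListNotations.
Open Scope R_scope.

Lemma der_plus (f g : R -> R) (x df dg : R) : is_derive f x df -> is_derive g x dg ->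
  is_derive (fun y => f y + g y) x (df + dg).
Proof. intros H1 H2. exact (is_derive_plus f g x df dg H1 H2). Qed.

Lemma der_mult (f g : R -> R) (x df dg : R) : is_derive f x df -> is_derive g x dg ->
  is_derive (fun y => f y * g y) x (df * g x + f x * dg).
Proof. intros H1 H2. exact (is_derive_mult f g x df dg H1 H2 Rmult_comm). Qed.

Lemma der_ext_val (f : R -> R) (x d d' : R) : is_derive f x d -> d = d' -> is_derive f x d'.
Proof. intros H <-; exact H. Qed.

Lemma incr_from_der (f f' : R -> R) : (forall x, is_derive f x (f' x)) ->
  (forall x, 0 <= x -> 0 <= f' x) -> forall x, 0 <= x -> f 0 <= f x.
Proof.
  intros Hd Hp x Hx. destruct (Req_dec x 0) as [->|Hne]; [lra|].
  destruct (MVT_cor2 f f' 0 x) as [c [Hc1 Hc2]]; [lra| |].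
  - intros c _; apply is_derive_Reals; apply Hd.
  - assert (0 <= f' c) by (apply Hp; lra).
    assert (0 <= f' c * (x - 0)) by (apply Rmult_le_pos; lra). lra.
Qed.

Section Gen.
Variable lam : nat -> R.

Definition sm (f : nat -> R) (L : list nat) : R := fold_right Rplus 0 (map f L).
Definition prodr (L : list nat) : R := fold_right Rmult 1 (map lam L).
Definition cf (j : nat) (L : list nat) : R :=
  fold_right Rmult 1 (map (fun m => if (m =? j)%nat then 1 else / (lam m - lam j)) L).
Definition D (L : list nat) (x : R) : R := sm (fun j => exp (-(x * lam j)) * cf j L) L.
Definition Sg (L : list nat) : R := sm (fun j => cf j L) L.
Definition Good (L : list nat) : Prop :=
  NoDup L /\ (forall m j, In m L -> In j L -> m <> j -> lam m <> lam j).

Lemma sm_cons f a L : sm f (a :: L) = f a + sm f L. Proof. reflexivity. Qed.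
Lemma sm_ext f g L : (forall j, In j L -> f j = g j) -> sm f L = sm g L.
Proof. intros H; unfold sm; f_equal; apply map_ext_in; auto. Qed.
Lemma sm_plus f g L : sm (fun j => f j + g j) L = sm f L + sm g L.
Proof. induction L; unfold sm in *; simpl; [lra|]. rewrite IHL; ring. Qed.
Lemma sm_scal c f L : sm (fun j => c * f j) L = c * sm f L.
Proof. induction L; unfold sm in *; simpl; [ring|]. rewrite IHL; ring. Qed.
Lemma sm_nonneg f L : (forall j, In j L -> 0 <= f j) -> 0 <= sm f L.
Proof.
  induction L; intros H; rewrite ?sm_cons; [unfold sm; simpl; lra|].
  assert (0 <= f a) by (apply H; left; auto).
  assert (0 <= sm f L) by (apply IHL; intros; apply H; right; auto). lra.
Qed.
Lemma sm_elem f L k : (forall j, In j L -> 0 <= f j) -> In k L -> f k <= sm f L.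
Proof.
  induction L; intros H Hk; simpl in Hk; [contradiction|].
  rewrite sm_cons. destruct Hk as [<-|Hk].
  - assert (0 <= sm f L) by (apply sm_nonneg; intros; apply H; right; auto). lra.
  - assert (0 <= f a) by (apply H; left; auto).
    assert (f k <= sm f L) by (apply IHL; auto; intros; apply H; right; auto). lra.
Qed.

Lemma Good_incl L L' : Good L -> NoDup L' -> incl L' L -> Good L'.
Proof. intros [_ H] Hn Hi; split; auto. Qed.

Lemma Good_tail a A : Good (a :: A) -> Good A.
Proof.
  intros HG. apply (Good_incl (a::A)); auto.
  - destruct HG as [Hn _]. apply NoDup_cons_iff in Hn; tauto.
  - intros y Hy; right; auto.
Qed.

Lemma Good_skip a b A : Good (a :: b :: A) -> Good (a :: A).
Proof.
  intros HG. apply (Good_incl (a::b::A)); auto.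
  - destruct HG as [Hn _]. apply NoDup_cons_iff in Hn as [H1 H2].
    apply NoDup_cons_iff in H2 as [H3 H4].
    apply NoDup_cons_iff; split; auto. intro; apply H1; right; auto.
  - intros y Hy; simpl in *; tauto.
Qed.

Lemma Good_head a A j : Good (a :: A) -> In j A -> a <> j /\ lam a - lam j <> 0.
Proof.
  intros [Hn H] Hj. apply NoDup_cons_iff in Hn as [Hna _].
  assert (a <> j) by (intro; subst; contradiction). split; auto.
  intro E. apply (H a j); simpl; auto. lra.
Qed.

Lemma cf_cons_same a L : cf a (a :: L) = cf a L.
Proof. unfold cf; simpl; rewrite Nat.eqb_refl; ring. Qed.
Lemma cf_cons_diff a j L : a <> j -> cf j (a :: L) = / (lam a - lam j) * cf j L.
Proof. intros H; unfold cf; simpl; apply Nat.eqb_neq in H; rewrite H; reflexivity. Qed.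

Lemma Sg1 a : Sg [a] = 1.
Proof. unfold Sg, sm, cf; simpl; rewrite Nat.eqb_refl; ring. Qed.

Lemma Sg2 a b A : Good (a :: b :: A) ->
  Sg (a :: b :: A) * (lam b - lam a) = Sg (a :: A) - Sg (b :: A).
Proof.
  intros HG.
  assert (Hab : a <> b /\ lam a - lam b <> 0) by (apply (Good_head a (b::A)); simpl; auto).
  destruct Hab as [Hab Hlab].
  assert (Hba : b <> a) by auto.
  assert (HGb : Good (b :: A)) by (eapply Good_tail; eauto).
  assert (HGa : Good (a :: A)) by (eapply Good_skip; eauto).
  unfold Sg. rewrite !sm_cons.
  rewrite cf_cons_same, (cf_cons_diff b a A Hba).
  rewrite (cf_cons_diff a b (b :: A) Hab), cf_cons_same, cf_cons_same.
  assert (E1 : sm (fun j => cf j (a :: b :: A)) A =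
     sm (fun j => / (lam a - lam j) * (/ (lam b - lam j) * cf j A)) A).
  { apply sm_ext; intros j Hj.
    destruct (Good_head a A j HGa Hj) as [H1 _].
    destruct (Good_head b A j HGb Hj) as [H2 _].
    rewrite (cf_cons_diff a j), (cf_cons_diff b j); auto. }
  assert (E2 : sm (fun j => cf j (a :: A)) A = sm (fun j => / (lam a - lam j) * cf j A) A).
  { apply sm_ext; intros j Hj. destruct (Good_head a A j HGa Hj) as [H1 _].
    rewrite cf_cons_diff; auto. }
  assert (E3 : sm (fun j => cf j (b :: A)) A = sm (fun j => / (lam b - lam j) * cf j A) A).
  { apply sm_ext; intros j Hj. destruct (Good_head b A j HGb Hj) as [H1 _].
    rewrite cf_cons_diff; auto. }
  rewrite E1, E2, E3.
  assert (E4 : sm (fun j => / (lam a - lam j) * cf j A) A =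
     sm (fun j => (lam b - lam a) * (/ (lam a - lam j) * (/ (lam b - lam j) * cf j A))
                  + / (lam b - lam j) * cf j A) A).
  { apply sm_ext; intros j Hj.
    destruct (Good_head a A j HGa Hj) as [_ H1].
    destruct (Good_head b A j HGb Hj) as [_ H2].
    field; split; auto. }
  rewrite E4, sm_plus, sm_scal. field. split; auto. intro; apply Hlab; lra.

Qed.

Lemma Sg0 A : forall a b, Good (a :: b :: A) -> Sg (a :: b :: A) = 0.
Proof.
  induction A as [|c A IH]; intros a b HG.
  - assert (Hab : a <> b /\ lam a - lam b <> 0) by (apply (Good_head a [b]); simpl; auto).
    destruct Hab as [_ Hlab]; pose proof (Sg2 a b _ HG) as E.
    rewrite !Sg1 in E.
    assert (H : Sg [a; b] * (lam b - lam a) = 0) by lra.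
    apply Rmult_integral in H as [H|H]; auto. exfalso; apply Hlab; lra.
  - assert (Hab : a <> b /\ lam a - lam b <> 0) by (apply (Good_head a (b :: c :: A)); simpl; auto).
    destruct Hab as [_ Hlab]; pose proof (Sg2 a b _ HG) as E.
    rewrite (IH a c), (IH b c) in E.
    + assert (H : Sg (a :: b :: c :: A) * (lam b - lam a) = 0) by lra.
      apply Rmult_integral in H as [H|H]; auto. exfalso; apply Hlab; lra.
    + eapply Good_tail; eauto.
    + eapply Good_skip; eauto.
Qed.

Lemma Sg_nonneg L : Good L -> 0 <= Sg L.
Proof.
  intros HG. destruct L as [|a [|b A]].
  - unfold Sg, sm; simpl; lra.
  - rewrite Sg1; lra.
  - rewrite Sg0; auto; lra.
Qed.

Lemma D0 L : D L 0 = Sg L.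
Proof.
  unfold D, Sg. apply sm_ext; intros j _. rewrite Rmult_0_l, Ropp_0, exp_0; ring.
Qed.

Lemma D_nil x : D [] x = 0. Proof. reflexivity. Qed.

Lemma sm_exp_deriv (c : nat -> R) M x :
  is_derive (fun y => sm (fun j => exp (-(y * lam j)) * c j) M) x
            (sm (fun j => - lam j * exp (-(x * lam j)) * c j) M).
Proof.
  induction M as [|a M IH].
  - unfold sm; simpl. exact (is_derive_const 0 x).
  - apply der_plus; auto.
    auto_derive; auto. ring.
Qed.

Definition Dd (L : list nat) (x : R) :=
  sm (fun j => - lam j * exp (-(x * lam j)) * cf j L) L.

Lemma D_deriv L x : is_derive (D L) x (Dd L x).
Proof. unfold D, Dd. apply sm_exp_deriv. Qed.

Lemma Dd_id a A x : Good (a :: A) -> Dd (a :: A) x = - lam a * D (a :: A) x + D A x.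
Proof.
  intros HG. unfold Dd, D. rewrite !sm_cons.
  assert (E : sm (fun j => - lam j * exp (-(x * lam j)) * cf j (a :: A)) A =
     sm (fun j => - lam a * (exp (-(x * lam j)) * cf j (a :: A)) + exp (-(x * lam j)) * cf j A) A).
  { apply sm_ext; intros j Hj. destruct (Good_head a A j HG Hj) as [H1 H2].
    rewrite cf_cons_diff; auto. field; auto. }
  rewrite E, sm_plus, sm_scal. ring.
Qed.

Lemma D_pos L : Good L -> forall x, 0 <= x -> 0 <= D L x.
Proof.
  induction L as [|a A IH]; intros HG x Hx.
  - rewrite D_nil; lra.
  - assert (HGA : Good A) by (eapply Good_tail; eauto).
    set (E := fun y => exp (y * lam a) * D (a :: A) y).
    assert (Hd : forall y, is_derive E y (exp (y * lam a) * D A y)).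
    { intro y. unfold E. eapply der_ext_val.
      - apply der_mult; [|apply D_deriv].
        auto_derive; auto.
      - rewrite Dd_id; auto. ring. }
    pose proof (incr_from_der E _ Hd) as Hm.
    assert (Hpos : forall y, 0 <= y -> 0 <= exp (y * lam a) * D A y).
    { intros y Hy. apply Rmult_le_pos; [left; apply exp_pos | apply IH; auto]. }
    specialize (Hm Hpos x Hx). unfold E in Hm.
    rewrite Rmult_0_l, exp_0, Rmult_1_l, D0 in Hm.
    pose proof (Sg_nonneg _ HG). pose proof (exp_pos (x * lam a)).
    destruct (Rlt_or_le (D (a :: A) x) 0); [|lra]. nra.
Qed.

Fixpoint T (L : list nat) (x : R) : R :=
  match L with [] => 0 | a :: A => prodr A * D (a :: A) x + T A x end.
Definition Tder (L : list nat) (x : R) : R :=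
  match L with [] => 0 | a :: A => - lam a * prodr A * D (a :: A) x end.

Lemma Tder_alt A x : Tder A x = - prodr A * D A x.
Proof. destruct A as [|b A]; simpl. - rewrite D_nil; ring. - unfold prodr; simpl; ring. Qed.

Lemma T_deriv L x : Good L -> is_derive (T L) x (Tder L x).
Proof.
  induction L as [|a A IH]; intros HG.
  - exact (is_derive_const 0 x).
  - assert (HGA : Good A) by (eapply Good_tail; eauto).
    change (T (a :: A)) with (fun y => prodr A * D (a :: A) y + T A y).
    eapply der_ext_val.
    + apply der_plus; [apply is_derive_scal, D_deriv | apply IH; auto].
    + rewrite Dd_id, Tder_alt; auto. simpl. ring.
Qed.

Lemma T0 L : Good L -> L <> [] -> T L 0 = 1.
Proof.
  induction L as [|a A IH]; intros HG Hne; [congruence|].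
  simpl. rewrite D0. destruct A as [|b A].
  - rewrite Sg1. unfold prodr; simpl; ring.
  - rewrite Sg0, IH; auto; [ring| eapply Good_tail; eauto | congruence].
Qed.

Lemma prodr_nonneg L : (forall m, In m L -> 0 < lam m) -> 0 <= prodr L.
Proof.
  induction L as [|a A IH]; intros H; unfold prodr in *; simpl; [lra|].
  apply Rmult_le_pos; [left; apply H; left; auto | apply IH; intros; apply H; right; auto].
Qed.

Lemma T_le1 L : Good L -> (forall m, In m L -> 0 < lam m) ->
  forall x, 0 <= x -> T L x <= 1.
Proof.
  intros HG Hp x Hx. destruct L as [|a A]; [simpl; lra|].
  rewrite <- (T0 (a :: A)); auto; [|congruence].
  pose proof (incr_from_der (fun y => - T (a :: A) y) (fun y => - Tder (a :: A) y)) as Hm.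
  assert (- T (a :: A) 0 <= - T (a :: A) x); [|lra].
  apply Hm; auto.
  - intro y. exact (is_derive_opp _ _ _ (T_deriv (a :: A) y HG)).
  - intros y Hy. simpl.
    assert (0 < lam a) by (apply Hp; left; auto).
    assert (0 <= prodr A) by (apply prodr_nonneg; intros; apply Hp; right; auto).
    assert (0 <= D (a :: A) y) by (apply D_pos; auto).
    assert (0 <= lam a * prodr A * D (a :: A) y) by (repeat apply Rmult_le_pos; lra).
    lra.
Qed.

Lemma T_nonneg L : Good L -> (forall m, In m L -> 0 < lam m) ->
  forall x, 0 <= x -> 0 <= T L x.
Proof.
  induction L as [|a A IH]; intros HG Hp x Hx; simpl; [lra|].
  assert (0 <= prodr A) by (apply prodr_nonneg; intros; apply Hp; right; auto).
  assert (0 <= D (a :: A) x) by (apply D_pos; auto).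
  assert (0 <= T A x) by (apply IH; auto; [eapply Good_tail; eauto | intros; apply Hp; right; auto]).
  assert (0 <= prodr A * D (a :: A) x) by (apply Rmult_le_pos; lra). lra.
Qed.

Lemma T_seq x m : forall a, T (seq a m) x =
  sm (fun k => prodr (seq (S k) (a + m - S k)) * D (seq k (a + m - k)) x) (seq a m).
Proof.
  induction m as [|m IH]; intros a; [reflexivity|].
  change (seq a (S m)) with (a :: seq (S a) m).
  simpl T. rewrite sm_cons, IH.
  replace (S a + m)%nat with (a + S m)%nat by lia.
  replace (a + S m - S a)%nat with m by lia.
  replace (a + S m - a)%nat with (S m) by lia. reflexivity.
Qed.

End Gen.

Lemma fold_Rplus_init z l : fold_right Rplus z l = fold_right Rplus 0 l + z.
Proof. induction l; simpl; [ring|]. rewrite IHl; ring. Qed.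

Lemma rsum_S m f : rsum 0 (S m) f = rsum 0 m f + f (S m).
Proof.
  unfold rsum. replace (S (S m) - 0)%nat with (S (S m)) by lia.
  replace (S m - 0)%nat with (S m) by lia.
  rewrite seq_S, map_app, fold_right_app. simpl. rewrite fold_Rplus_init. ring.
Qed.

Section Beta.
Variables (N : nat) (beta : nat -> R).
Hypothesis Hadm : admissible N beta.

Lemma beta_pos i : (i <= N)%nat -> 0 < beta i.
Proof.
  pose proof Hadm as [Hd [HN _]].
  assert (forall d, (d <= N)%nat -> 0 < beta (N - d)%nat).
  { induction d; intros Hle. - replace (N - 0)%nat with N by lia; auto.
    - assert (0 < beta (N - d)%nat) by (apply IHd; lia).
      pose proof (Hd (N - S d)%nat ltac:(lia)).
      replace (S (N - S d)) with (N - d)%nat in H0 by lia. lra. }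
  intros Hi. replace i with (N - (N - i))%nat by lia. apply H; lia.
Qed.

Lemma rsum_pos m : (m <= N)%nat -> 0 < rsum 0 m beta.
Proof.
  induction m; intros Hm.
  - unfold rsum; simpl. pose proof (beta_pos 0 ltac:(lia)). lra.
  - rewrite rsum_S. pose proof (beta_pos (S m) Hm). pose proof (IHm ltac:(lia)). lra.
Qed.

Definition lamb (m : nat) : R := / mu beta m.

Lemma mu_pos m : (m < N)%nat -> 0 < mu beta m.
Proof.
  intros Hm. unfold mu. apply Rdiv_lt_0_compat; [apply beta_pos; lia | apply rsum_pos; lia].
Qed.

Lemma lamb_pos m : (m < N)%nat -> 0 < lamb m.
Proof. intros; unfold lamb; apply Rinv_0_lt_compat, mu_pos; auto. Qed.

Lemma lamb_step m : (S m < N)%nat -> lamb m < lamb (S m).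
Proof.
  intros Hm. unfold lamb. apply Rinv_lt_contravar.
  - apply Rmult_lt_0_compat; apply mu_pos; lia.
  - unfold mu. rewrite rsum_S.
    pose proof (rsum_pos m ltac:(lia)) as Hs.
    pose proof (beta_pos (S m) ltac:(lia)) as Hb1.
    pose proof (beta_pos (S (S m)) ltac:(lia)) as Hb2.
    pose proof Hadm as [Hd _]. pose proof (Hd (S m) Hm) as Hle.
    set (s := rsum 0 m beta) in *. set (b1 := beta (S m)) in *. set (b2 := beta (S (S m))) in *.
    assert (E1 : b2 / (s + b1) = b2 * s * / (s * (s + b1))) by (field; lra).
    assert (E2 : b1 / s = b1 * (s + b1) * / (s * (s + b1))) by (field; lra).
    rewrite E1, E2. apply Rmult_lt_compat_r.
    + apply Rinv_0_lt_compat; nra.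
    + nra.
Qed.

Lemma lamb_mono m m' : (m < m')%nat -> (m' < N)%nat -> lamb m < lamb m'.
Proof.
  induction m'; intros H1 H2; [lia|].
  destruct (Nat.eq_dec m m') as [->|Hne].
  - apply lamb_step; auto.
  - apply Rlt_trans with (lamb m'); [apply IHm'; lia | apply lamb_step; auto].
Qed.

Lemma Good_seq a n : (a + n <= N)%nat -> Good lamb (seq a n).
Proof.
  intros H. split; [apply seq_NoDup|].
  intros m j Hm Hj Hne. apply in_seq in Hm, Hj.
  destruct (Nat.lt_total m j) as [Hl|[Hl|Hl]]; [| contradiction |].
  - pose proof (lamb_mono m j Hl ltac:(lia)); lra.
  - pose proof (lamb_mono j m Hl ltac:(lia)); lra.
Qed.

Lemma pos_seq a n : (a + n <= N)%nat -> forall m, In m (seq a n) -> 0 < lamb m.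
Proof. intros H m Hm. apply in_seq in Hm. apply lamb_pos; lia. Qed.

Lemma p_pos_eq l k : (1 <= k <= N)%nat ->
  p_pos N beta l k = prodr lamb (seq k (N - k)) * D lamb (seq (k - 1) (N - (k - 1))) (l ^ 2 / 2).
Proof.
  intros Hk. unfold p_pos. destruct (Nat.eqb_spec k N) as [->|Hne].
  - replace (N - N)%nat with 0%nat by lia.
    replace (N - (N - 1))%nat with 1%nat by lia.
    unfold prodr, D, sm, cf; simpl. rewrite Nat.eqb_refl.
    pose proof Hadm as [_ [HN Hs]].
    pose proof (rsum_S (N-1) beta) as E. replace (S (N-1)) with N in E by lia.
    unfold lamb, mu. pose proof (rsum_pos (N-1) ltac:(lia)).
    replace (S (N - 1)) with N by lia.
    replace (rsum 0 (N-1) beta) with (1 - beta N) in * by lra.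
    rewrite !Rmult_1_l, Rmult_1_r, Rplus_0_r, Rmult_1_r. f_equal. field. lra.
  - unfold rprod, rsum.
    replace (S (N - 1) - k)%nat with (N - k)%nat by lia.
    replace (S (N - 1) - (k - 1))%nat with (N - (k - 1))%nat by lia.
    unfold prodr, D, sm, cf, lamb. f_equal.
    f_equal. apply map_ext. intros j. f_equal. f_equal.
    unfold Rdiv. rewrite Rinv_mult. ring.
Qed.

End Beta.

Theorem mainTheorem2 (N : nat) (beta : nat -> R) (l : R)
  (Hadm : admissible N beta) (Hl : l < 0) :
  (forall k : nat, (k <= N)%nat -> 0 <= p N beta l k <= 1) /\
  rsum 0 N (fun k => p N beta l k) = 1.
Proof.
  destruct N as [|n].
  - split.
    + intros k Hk. replace k with 0%nat by lia. unfold p; simpl. lra.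
    + unfold rsum, p; simpl. ring.
  - set (N := S n) in *.
    set (x := l ^ 2 / 2).
    assert (Hx : 0 <= x) by (unfold x; nra).
    set (lam := lamb beta).
    assert (Hpk : forall k, (1 <= k <= N)%nat -> 0 <= p_pos N beta l k).
    { intros k Hk. rewrite p_pos_eq; auto. apply Rmult_le_pos.
      - apply prodr_nonneg. apply (pos_seq N beta Hadm). lia.
      - apply D_pos; auto. apply (Good_seq N beta Hadm). lia. }
    assert (HS : rsum 1 N (p_pos N beta l) = T lam (seq 0 N) x).
    { rewrite T_seq. unfold rsum. replace (S N - 1)%nat with N by lia.
      rewrite <- seq_shift, map_map. unfold sm. f_equal. apply map_ext_in.
      intros k Hk. apply in_seq in Hk. rewrite p_pos_eq; auto; [|lia].
      replace (S k - 1)%nat with k by lia.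
      replace (N - k)%nat with (0 + N - k)%nat by lia. reflexivity. }
    assert (HT1 : T lam (seq 0 N) x <= 1).
    { apply T_le1; auto; [apply (Good_seq N beta Hadm) | apply (pos_seq N beta Hadm)]; lia. }
    assert (HT0 : 0 <= T lam (seq 0 N) x).
    { apply T_nonneg; auto; [apply (Good_seq N beta Hadm) | apply (pos_seq N beta Hadm)]; lia. }
    assert (Hp0 : p N beta l 0 = 1 - rsum 1 N (p_pos N beta l)) by reflexivity.
    assert (Hpp : forall k, k <> 0%nat -> p N beta l k = p_pos N beta l k).
    { intros k Hk. unfold p. destruct (Nat.eqb_spec k 0); [contradiction|reflexivity]. }
    split.
    + intros k Hk. destruct (Nat.eq_dec k 0) as [->|Hk0].
      * rewrite Hp0, HS; lra.
      * rewrite Hpp; auto. split; [apply Hpk; lia|].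
        assert (p_pos N beta l k <= rsum 1 N (p_pos N beta l)); [|lra].
        unfold rsum. apply (sm_elem (p_pos N beta l)).
        -- intros j Hj. apply in_seq in Hj. apply Hpk; lia.
        -- apply in_seq. lia.
    + unfold rsum. replace (S N - 0)%nat with (S N) by lia.
      change (seq 0 (S N)) with (0%nat :: seq 1 N).
      change (fold_right Rplus 0 (map (fun k => p N beta l k) (0%nat :: seq 1 N))) with
        (sm (fun k => p N beta l k) (0%nat :: seq 1 N)).
      rewrite sm_cons, Hp0.
      assert (E : sm (fun k => p N beta l k) (seq 1 N) = rsum 1 N (p_pos N beta l)).
      { unfold rsum, sm. replace (S N - 1)%nat with N by lia. f_equal. apply map_ext_in.
        intros k Hk. apply in_seq in Hk. apply Hpp; lia. }
      rewrite E. ring.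
Qed.
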